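(* Let $u$ be a smooth solution of the equivariant Skyrme equation in $\Omega$ with $u(t,0)=0$, and let $(t_n)_n\subset(0,T_0]$ be a sequence with $t_n\to0$ and \[ \lim_{n\to\infty}\int_0^{t_n}\frac{\sin^2u(t_n,r)}{r^2}\,u_r(t_n,r)^2\,r\,dr=0. \] Then there are constants $C_n$ with $C_n\to0$ as $n\to\infty$ such that $|u(t_n,r)|\le C_n\,r^{1/2}$ for all $0\le r\le t_n$ (for all $n$ sufficiently large).
   Context: Fix $\alpha>0$, $T_0>0$. The equivariant Skyrme equation is \[ \Big(1+\tfrac{\alpha^2\sin^2u}{r^2}\Big)(u_{tt}-u_{rr}) - \Big(1-\tfrac{\alpha^2\sin^2u}{r^2}\Big)\tfrac{u_r}{r} + \tfrac{\sin 2u}{2r^2}\big[\alpha^2(u_t^2-u_r^2)+1\big]=0. \] $\Omega=\{(t,r):0<t\le T_0,\ 0\le r\le t\}$; a smooth solution in $\Omega$ is a smooth function on $\Omega$ satisfying the equation for $r>0$. *)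

(* Defs.v *)
From Stdlib Require Import Reals Lra.
Open Scope R_scope.

Definition openR2 (O : R -> R -> Prop) : Prop :=
  forall t r, O t r -> exists e, 0 < e /\
    forall t' r', Rabs (t' - t) < e -> Rabs (r' - r) < e -> O t' r'.

Definition cont2_on (O : R -> R -> Prop) (f : R -> R -> R) : Prop :=
  forall t r, O t r -> forall eps, 0 < eps -> exists d, 0 < d /\
    forall t' r', O t' r' -> Rabs (t' - t) < d -> Rabs (r' - r) < d ->
      Rabs (f t' r' - f t r) < eps.

Definition is_dt_on (S : R -> R -> Prop) (f g : R -> R -> R) : Prop :=
  forall t r, S t r -> derivable_pt_lim (fun s => f s r) t (g t r).

Definition is_dr_on (S : R -> R -> Prop) (f g : R -> R -> R) : Prop :=
  forall t r, S t r -> derivable_pt_lim (fun s => f t s) r (g t r).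

Fixpoint Ck_on (k : nat) (O : R -> R -> Prop) (f : R -> R -> R) : Prop :=
  match k with
  | O => cont2_on O f
  | S k' => cont2_on O f /\
      exists ft fr, is_dt_on O f ft /\ is_dr_on O f fr /\
                    Ck_on k' O ft /\ Ck_on k' O fr
  end.

Definition smooth_on (O : R -> R -> Prop) (f : R -> R -> R) : Prop :=
  forall k, Ck_on k O f.

Definition Omega (T0 t r : R) : Prop := 0 < t <= T0 /\ 0 <= r <= t.

(* u is smooth on Omega: u is C^infinity on some open set containing Omega
   (i.e. u is the restriction to Omega of a smooth function on a neighbourhood). *)
Definition smooth_in_Omega (T0 : R) (u : R -> R -> R) : Prop :=
  exists O, openR2 O /\ (forall t r, Omega T0 t r -> O t r) /\ smooth_on O u.

Definition skyrme_eq (alpha : R) (u ut ur utt urr : R -> R -> R) (t r : R) : Prop :=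
  (1 + alpha ^ 2 * sin (u t r) ^ 2 / r ^ 2) * (utt t r - urr t r)
  - (1 - alpha ^ 2 * sin (u t r) ^ 2 / r ^ 2) * (ur t r / r)
  + sin (2 * u t r) / (2 * r ^ 2) * (alpha ^ 2 * (ut t r ^ 2 - ur t r ^ 2) + 1) = 0.

Definition smooth_solution (alpha T0 : R) (u ut ur utt urr : R -> R -> R) : Prop :=
  smooth_in_Omega T0 u /\
  is_dt_on (Omega T0) u ut /\ is_dr_on (Omega T0) u ur /\
  is_dt_on (Omega T0) ut utt /\ is_dr_on (Omega T0) ur urr /\
  (forall t r, Omega T0 t r -> 0 < r -> skyrme_eq alpha u ut ur utt urr t r).

Definition angular_density (u ur : R -> R -> R) (t : R) : R -> R :=
  fun r => sin (u t r) ^ 2 / r ^ 2 * ur t r ^ 2 * r.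

(* Main.v *)
Require Import Defs.
From Stdlib Require Import Reals Lra.
From Coquelicot Require Import Coquelicot.
Open Scope R_scope.

Lemma cos_low (x : R) : Rabs x <= 1 -> x ^ 2 / 3 <= 1 - cos x.
Proof.
  intros Hx.
  assert (Hb : cos x <= cos_ub x).
  { assert (H := PI2_1). unfold Rabs in Hx; destruct (Rcase_abs x); apply COS; lra. }
  assert (E : cos_ub x = 1 - x^2/2 + x^4/24 - x^6/720 + x^8/40320).
  { unfold cos_ub, cos_approx, cos_term. cbn [sum_f_R0 Nat.mul Nat.add].
    repeat rewrite fact_simpl. repeat rewrite mult_INR. repeat rewrite S_INR. simpl INR. field. }
  assert (Hy : x^2 <= 1).
  { unfold Rabs in Hx; destruct (Rcase_abs x); nra. }
  assert (0 <= x^2) by nra.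
  assert (x^4 = x^2*x^2) by ring.
  assert (x^6 = x^2*x^2*x^2) by ring.
  assert (x^8 = x^2*x^2*x^2*x^2) by ring.
  set (y := x^2) in *.
  assert (y*y <= y) by nra.
  assert (y*y*y <= y*y) by nra.
  assert (y*y*y*y <= y*y*y) by nra.
  nra.
Qed.

Lemma amgm (a q s lam : R) : 0 < s -> 0 < lam -> q * s = a ^ 2 -> a <= lam/2 * q + s/(2*lam).
Proof.
  intros Hs Hl Hq.
  assert (H := pow2_ge_0 (lam * a - s)).
  apply Rmult_le_reg_r with (2*lam*s). nra.
  replace ((lam / 2 * q + s / (2 * lam)) * (2 * lam * s)) with (lam*lam*(q*s) + s*s) by (field; lra).
  rewrite Hq. nra.
Qed.

Lemma core (v dv g : R -> R) (r lam : R) : 0 < r -> 0 < lam ->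
 (forall s, 0<=s<=r -> is_derive v s (dv s)) ->
 (forall s, 0<=s<=r -> continuity_pt dv s) ->
 ex_RInt g 0 r ->
 (forall s, 0<s<r -> sin (v s) * dv s <= lam/2 * g s + s/(2*lam)) ->
 (1 - cos (v r)) - (1 - cos (v 0)) <= lam/2 * RInt g 0 r + r^2/(4*lam).
Proof.
  intros Hr Hl Hd Hc Hg Hp.
  assert (Hmm : forall x, Rmin 0 r <= x <= Rmax 0 r -> 0 <= x <= r).
  { intros x. rewrite Rmin_left, Rmax_right; lra. }
  assert (H1 : is_RInt (fun s => sin (v s) * dv s) 0 r (minus (1 - cos (v r)) (1 - cos (v 0)))).
  { apply (is_RInt_derive (fun s => 1 - cos (v s))).
    - intros x Hx. apply Hmm in Hx. specialize (Hd x Hx).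
      apply is_derive_Reals in Hd. apply is_derive_Reals.
      assert (H2 := derivable_pt_lim_comp v cos x (dv x) (- sin (v x)) Hd (derivable_pt_lim_cos (v x))).
      assert (H3 := derivable_pt_lim_minus (fun _ => 1) (comp cos v) x 0 _ (derivable_pt_lim_const 1 x) H2).
      unfold comp, minus_fct in H3.
      replace (sin (v x) * dv x) with (0 - - sin (v x) * dv x) by ring. exact H3.
    - intros x Hx. apply Hmm in Hx. apply continuity_pt_filterlim.
      apply continuity_pt_mult.
      + apply (continuity_pt_comp v sin). 
        * apply derivable_continuous_pt. exists (dv x). apply is_derive_Reals. apply Hd; lra.
        * apply continuity_sin.
      + apply Hc; lra. }
  assert (H2 : is_RInt (fun s => s/(2*lam)) 0 r (minus (r^2/(4*lam)) (0^2/(4*lam)))).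
  { apply (is_RInt_derive (fun s => s^2/(4*lam))).
    - intros x Hx. auto_derive. auto. field. lra.
    - intros x Hx. apply continuity_pt_filterlim. apply continuity_pt_div.
      apply continuity_pt_id. apply continuity_pt_const. intros a b; auto. lra. }
  assert (H3 := is_RInt_plus _ _ _ _ _ _ (is_RInt_scal _ _ _ (lam/2) _ (RInt_correct g 0 r Hg)) H2).
  assert (E1 := ex_intro _ _ H1). assert (E3 := ex_intro _ _ H3).
  apply (is_RInt_unique (V:=R_CompleteNormedModule)) in H1. apply (is_RInt_unique (V:=R_CompleteNormedModule)) in H3.
  change (minus (1 - cos (v r)) (1 - cos (v 0))) with ((1 - cos (v r)) - (1 - cos (v 0))) in H1.
  rewrite <- H1.
  apply Rle_trans with (RInt (fun y => plus (scal (lam / 2) (g y)) (y / (2 * lam))) 0 r).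
  - apply RInt_le. lra.
    + exact E1.
    + exact E3.
    + intros x Hx. change (sin (v x) * dv x <= lam/2 * g x + x/(2*lam)). apply Hp; lra.
  - right. eapply eq_trans; [exact H3|].
    change (lam/2 * RInt g 0 r + (r^2/(4*lam) - 0^2/(4*lam)) = lam/2 * RInt g 0 r + r^2/(4*lam)). field. lra.
Qed.

Lemma slice_cont (O : R -> R -> Prop) f t s : openR2 O -> cont2_on O f -> O t s ->
  continuity_pt (fun x => f t x) s.
Proof.
  intros HO Hc Hts.
  unfold continuity_pt, continue_in, limit1_in, limit_in. simpl. unfold R_dist.
  intros eps Heps.
  destruct (HO t s Hts) as [e [He HOe]].
  destruct (Hc t s Hts eps Heps) as [d [Hd Hcd]].
  exists (Rmin d e). split. apply Rmin_pos; lra.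
  intros x [_ Hx].
  assert (Hx1 : Rabs (x - s) < d) by (eapply Rlt_le_trans; [exact Hx| apply Rmin_l]).
  assert (Hx2 : Rabs (x - s) < e) by (eapply Rlt_le_trans; [exact Hx| apply Rmin_r]).
  assert (Ht0 : Rabs (t - t) < e) by (rewrite Rminus_eq_0, Rabs_R0; lra).
  assert (Ht1 : Rabs (t - t) < d) by (rewrite Rminus_eq_0, Rabs_R0; lra).
  apply Hcd; auto.
Qed.

Lemma clamp_lip t x y : 0 <= t -> Rabs (Rmax 0 (Rmin x t) - Rmax 0 (Rmin y t)) <= Rabs (x - y).
Proof.
  intros Ht. unfold Rmax, Rmin.
  repeat (destruct Rle_dec); unfold Rabs; repeat (destruct Rcase_abs); lra.
Qed.

Lemma clamp_in t x : 0 <= t -> 0 <= Rmax 0 (Rmin x t) <= t.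
Proof.
  intros Ht. unfold Rmax, Rmin. repeat (destruct Rle_dec); lra.
Qed.

Lemma clamp_cont (O : R -> R -> Prop) f t : 0 <= t -> cont2_on O f ->
  (forall s, 0 <= s <= t -> O t s) ->
  continuity (fun s => f t (Rmax 0 (Rmin s t))).
Proof.
  intros Ht Hc HOt s.
  unfold continuity_pt, continue_in, limit1_in, limit_in. simpl. unfold R_dist.
  intros eps Heps.
  assert (Hin := clamp_in t s Ht).
  destruct (Hc t _ (HOt _ Hin) eps Heps) as [d [Hd Hcd]].
  exists d. split. lra.
  intros x [_ Hx].
  apply Hcd.
  - apply HOt, clamp_in, Ht.
  - rewrite Rminus_eq_0, Rabs_R0; lra.
  - eapply Rle_lt_trans. apply clamp_lip; lra. exact Hx.
Qed.

Lemma bound_lemma (T0 : R) (u ur fr : R -> R -> R) (O : R -> R -> Prop) (t delta : R) :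
  openR2 O -> (forall t r, Omega T0 t r -> O t r) ->
  is_dr_on (Omega T0) u ur -> is_dr_on O u fr -> cont2_on O fr ->
  0 < t <= T0 -> u t 0 = 0 -> 0 < delta ->
  ex_RInt (angular_density u ur t) 0 t ->
  RInt (angular_density u ur t) 0 t <= delta ^ 2 ->
  forall s, 0 <= s <= t -> 1 - cos (u t s) <= s * delta.
Proof.
  intros HO HOm Hdr Hfr Hcfr Ht Hu0 Hd Hex HE s Hs.
  set (f := angular_density u ur t) in *.
  destruct (Req_dec s 0) as [Hs0|Hs0].
  { subst s. rewrite Hu0, cos_0. lra. }
  assert (Hsp : 0 < s) by lra.
  assert (Hom : forall x, 0 <= x <= s -> Omega T0 t x) by (intros; unfold Omega; lra).
  set (lam := s / delta).
  assert (Hlam : 0 < lam) by (unfold lam; apply Rdiv_lt_0_compat; lra).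
  assert (Hexs : ex_RInt f 0 s) by (apply (ex_RInt_Chasles_1 (V:=R_CompleteNormedModule) _ _ _ t); [lra|exact Hex]).
  assert (Hc := core (fun x => u t x) (fun x => fr t x) f s lam Hsp Hlam).
  assert (H := Hc).
  clear Hc.
  assert (Hmain : (1 - cos (u t s)) - (1 - cos (u t 0)) <= lam/2 * RInt f 0 s + s^2/(4*lam)).
  { apply H; clear H.
    - intros x Hx. apply is_derive_Reals. apply Hfr. apply HOm, Hom, Hx.
    - intros x Hx. apply (slice_cont O fr t x HO Hcfr). apply HOm, Hom, Hx.
    - exact Hexs.
    - intros x Hx.
      assert (Heq : fr t x = ur t x).
      { apply (uniqueness_limite (fun y => u t y) x).
        apply Hfr, HOm, Hom; lra. apply Hdr, Hom; lra. }
      rewrite Heq. apply amgm; try lra.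
      unfold f, angular_density. field. lra. }
  rewrite Hu0, cos_0 in Hmain.
  assert (Hle : RInt f 0 s <= RInt f 0 t).
  { assert (Hext : ex_RInt f s t) by (apply (ex_RInt_Chasles_2 (V:=R_CompleteNormedModule) _ 0); [lra|exact Hex]).
    assert (Hch := RInt_Chasles (V:=R_CompleteNormedModule) f 0 s t Hexs Hext).
    assert (Hpos : 0 <= RInt f s t).
    { apply RInt_ge_0. lra. exact Hext. intros x Hx. unfold f, angular_density.
      apply Rmult_le_pos; [apply Rmult_le_pos|lra].
      - unfold Rdiv. apply Rmult_le_pos. apply pow2_ge_0. left. apply Rinv_0_lt_compat. apply pow_lt. lra.
      - apply pow2_ge_0. }
    change (RInt f 0 s + RInt f s t = RInt f 0 t) in Hch. lra. }
  assert (Hl1 : lam / 2 * RInt f 0 s <= lam / 2 * delta ^ 2).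
  { apply Rmult_le_compat_l; lra. }
  assert (Hl2 : lam / 2 * delta ^ 2 = s * delta / 2) by (unfold lam; field; lra).
  assert (Hl3 : s ^ 2 / (4 * lam) = s * delta / 4) by (unfold lam; field; lra).
  assert (0 < s * delta) by nra.
  lra.
Qed.

Theorem mainTheorem6 (alpha T0 : R) (u ut ur utt urr : R -> R -> R)
  (tn : nat -> R) :
  0 < alpha -> 0 < T0 ->
  smooth_solution alpha T0 u ut ur utt urr ->
  (forall t, 0 < t <= T0 -> u t 0 = 0) ->
  (forall n, 0 < tn n <= T0) ->
  Un_cv tn 0 ->
  (exists pr : forall n, Riemann_integrable (angular_density u ur (tn n)) 0 (tn n),
      Un_cv (fun n => RiemannInt (pr n)) 0) ->
  exists C : nat -> R, Un_cv C 0 /\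
    exists N : nat, forall n, (N <= n)%nat ->
      forall r, 0 <= r <= tn n -> Rabs (u (tn n) r) <= C n * sqrt r.
Proof.
  intros Ha HT0 Hsol Hu0 Htn Hcvt [pr Hcv].
  destruct Hsol as [[O [HO [HOm Hsm]]] [_ [Hdr _]]].
  assert (Hcu : cont2_on O u) by exact (Hsm 0%nat).
  destruct (Hsm 1%nat) as [_ [ft [fr [_ [Hfr [_ Hcfr]]]]]].
  simpl in Hcfr.
  set (E := fun n => RiemannInt (pr n)).
  set (delta := fun n => sqrt (Rabs (E n)) + tn n).
  assert (Hdcv : Un_cv delta 0).
  { replace 0 with (sqrt (Rabs 0) + 0) by (rewrite Rabs_R0, sqrt_0; ring).
    apply CV_plus; [|exact Hcvt].
    apply (continuity_seq (fun x => sqrt (Rabs x))); [|exact Hcv].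
    apply (continuity_pt_comp Rabs sqrt). apply Rcontinuity_abs.
    apply continuity_pt_sqrt. apply Rabs_pos. }
  exists (fun n => sqrt (3 * delta n)). split.
  { replace 0 with (sqrt (3 * 0)) by (rewrite Rmult_0_r, sqrt_0; ring).
    apply (continuity_seq (fun x => sqrt (3 * x))); [|exact Hdcv].
    apply (continuity_pt_comp (fun x => 3 * x) sqrt).
    apply continuity_pt_mult. apply continuity_pt_const. intros a b; auto. apply continuity_pt_id.
    apply continuity_pt_sqrt. lra. }
  assert (Heps : 0 < 1 / (3 * T0)) by (apply Rdiv_lt_0_compat; lra).
  destruct (Hdcv _ Heps) as [N HN].
  exists N. intros n Hn r Hr.
  specialize (HN n Hn). unfold R_dist in HN. rewrite Rminus_0_r in HN.
  set (t := tn n) in *.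
  assert (Ht := Htn n). fold t in Ht.
  assert (Hdpos : 0 < delta n).
  { unfold delta. assert (0 <= sqrt (Rabs (E n))) by apply sqrt_pos. fold t. lra. }
  rewrite Rabs_right in HN by lra.
  assert (HEle : RInt (angular_density u ur t) 0 t <= delta n ^ 2).
  { unfold t. rewrite (RInt_Reals _ _ _ (pr n)). fold (E n). fold t.
    unfold delta. assert (Hs := sqrt_sqrt (Rabs (E n)) (Rabs_pos _)).
    assert (0 <= sqrt (Rabs (E n))) by apply sqrt_pos.
    assert (E n <= Rabs (E n)) by apply RRle_abs. fold t. nra. }
  assert (Hb := bound_lemma T0 u ur fr O t (delta n) HO HOm Hdr Hfr Hcfr Ht (Hu0 t Ht) Hdpos
                  (ex_RInt_Reals_1 _ _ _ (pr n)) HEle).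
  assert (Hsmall : forall s, 0 <= s <= t -> 1 - cos (u t s) < 1/3).
  { intros s Hs. specialize (Hb s Hs).
    assert (s * delta n <= T0 * delta n) by (apply Rmult_le_compat_r; lra).
    assert (T0 * delta n < T0 * (1 / (3 * T0))) by (apply Rmult_lt_compat_l; lra).
    replace (T0 * (1 / (3 * T0))) with (1/3) in * by (field; lra). lra. }
  assert (Hone : forall s, 0 <= s <= t -> Rabs (u t s) <= 1).
  { intros s0 Hs0. destruct (Rle_lt_dec (Rabs (u t s0)) 1) as [Hl|Hl]; [exact Hl|exfalso].
    set (h := fun s => (u t (Rmax 0 (Rmin s t)))^2 - 1).
    assert (Hh : continuity h).
    { intros x. unfold h. apply continuity_pt_minus; [|apply continuity_pt_const; intros a b; auto].
      apply (continuity_pt_comp (fun s => u t (Rmax 0 (Rmin s t))) (fun y => y^2)).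
      apply (clamp_cont O u t); [lra|exact Hcu|]. intros s Hs. apply HOm. unfold Omega; lra.
      apply derivable_continuous_pt. apply derivable_pt_pow. }
    assert (Hc0 : Rmax 0 (Rmin 0 t) = 0) by (unfold Rmax, Rmin; repeat destruct Rle_dec; lra).
    assert (Hcs : Rmax 0 (Rmin s0 t) = s0) by (unfold Rmax, Rmin; repeat destruct Rle_dec; lra).
    assert (Hprod : h 0 * h s0 <= 0).
    { unfold h. rewrite Hc0, Hcs, (Hu0 t Ht).
      assert (1 < (u t s0)^2).
      { rewrite <- Rsqr_pow2. rewrite Rsqr_abs. replace 1 with (Rsqr 1) by (unfold Rsqr; ring).
        apply Rsqr_incrst_1; lra. }
      nra. }
    destruct (IVT_cor h 0 s0 Hh (proj1 Hs0) Hprod) as [z [Hz Hhz]].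
    unfold h in Hhz.
    set (z' := Rmax 0 (Rmin z t)) in Hhz.
    assert (Hz' : 0 <= z' <= t) by (apply clamp_in; lra).
    assert (Habs : Rabs (u t z') = 1).
    { assert (Hq : Rsqr (Rabs (u t z')) = Rsqr 1) by (rewrite <- Rsqr_abs; unfold Rsqr; nra).
      apply Rsqr_inj; auto using Rabs_pos; lra. }
    assert (Hcos : cos (u t z') = cos 1).
    { unfold Rabs in Habs. destruct (Rcase_abs (u t z')).
      replace (u t z') with (- 1) by lra. apply cos_neg. rewrite Habs. reflexivity. }
    assert (Hlow := cos_low 1). rewrite Rabs_R1 in Hlow.
    specialize (Hsmall z' Hz'). rewrite Hcos in Hsmall.
    assert (1 ^ 2 / 3 = 1/3) by field. lra. }
  assert (Hsq : (u t r)^2 <= 3 * delta n * r).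
  { assert (H1 := cos_low (u t r) (Hone r Hr)). assert (H2 := Hb r Hr). lra. }
  rewrite <- sqrt_mult by lra.
  rewrite <- sqrt_Rsqr_abs. apply sqrt_le_1_alt. rewrite Rsqr_pow2. exact Hsq.
Qed.
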